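(* Let $k$ be an infinite field and $n>0$ an integer. Then the action of $\mathrm{SO}_{2n+1}(k)$ on $\mathrm{Q}_{2n}(k)$ described in the context is transitive.
   Context: $\mathrm{Q}_{2n}$ is realized as the closed subscheme of $\mathbb{A}^{2n+2}_k$ given by $q_{2n+2}=0$ and $t_{2n+2}=1$, where $q_{2n+2}=\sum_{i=1}^{n+1}x_ix_{n+1+i}$, $t_{2n+2}(x)=x_{n+1}+x_{2n+2}=B(x,1)$ with $B$ the polar bilinear form of $q_{2n+2}$ and $1$ the vector with $x_{n+1}=x_{2n+2}=1$, other coordinates $0$ (this scheme is isomorphic to the hypersurface $\sum_{i=1}^nx_ix_{n+i}=x_{2n+1}(1-x_{2n+1})$ in $\mathbb{A}^{2n+1}_k$). The group $\mathrm{SO}_{2n+1}$ (kernel of the determinant on the orthogonal group scheme $\mathrm{O}_{2n+1}$ of $q_{2n+1}=\sum_{i=1}^nx_ix_{n+i}+x_{2n+1}^2$) acts on $\mathbb{A}^{2n+2}_k$ via the identification of $\mathrm{O}_{2n+1}$ with the stabilizer of $1$ in $\mathrm{GSO}_{2n+2}$ (the subgroup of similitudes of $q_{2n+2}$ generated by scalars and $\mathrm{SO}_{2n+2}$), using the embedding $(x_1,\dots,x_{2n+1})\mapsto(x_1,\dots,x_n,x_{2n+1},x_{n+1},\dots,x_{2n},x_{2n+1})$; this action preserves $q_{2n+2}$ and $t_{2n+2}$, hence $\mathrm{Q}_{2n}$. *)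

(* Defs.v *)
From HB Require Import structures.
From mathcomp Require Import all_boot all_order all_algebra.
Set Implicit Arguments. Unset Strict Implicit. Unset Printing Implicit Defensive.
Import Order.TTheory GRing.Theory Num.Theory.
Local Open Scope ring_scope.

(* Coordinates x_1..x_{2n+2} of A^{2n+2} are indexed by 'I_(n.+1 + n.+1):
   x_i (1 <= i <= n+1)  is  x (lshift _ (i-1)),
   x_{n+1+i}            is  x (rshift _ (i-1)). *)
Definition vec (k : fieldType) (n : nat) := 'cV[k]_(n.+1 + n.+1).

Definition q2 (k : fieldType) (n : nat) (x : vec k n) : k :=
  \sum_(i < n.+1) x (lshift n.+1 i) 0 * x (rshift n.+1 i) 0.

Definition t2 (k : fieldType) (n : nat) (x : vec k n) : k :=
  x (lshift n.+1 ord_max) 0 + x (rshift n.+1 ord_max) 0.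

Definition one_vec (k : fieldType) (n : nat) : vec k n :=
  \col_i (if (i == lshift n.+1 ord_max) || (i == rshift n.+1 ord_max)
          then 1 else 0).

Definition Q2n (k : fieldType) (n : nat) (x : vec k n) : Prop :=
  q2 x = 0 /\ t2 x = 1.

(* k-points of SO_{2n+2}: isometries of q_{2n+2} with trivial Dickson
   invariant, i.e. rank(A - 1) even (this agrees with det A = 1 when
   char k <> 2 and is the correct definition in every characteristic). *)
Definition SO2 (k : fieldType) (n : nat) (A : 'M[k]_(n.+1 + n.+1)) : Prop :=
  (forall v : vec k n, q2 (A *m v) = q2 v) /\ ~~ odd (\rank (A - 1%:M)).

Definition GSO2 (k : fieldType) (n : nat) (g : 'M[k]_(n.+1 + n.+1)) : Prop :=
  exists (c : k) (A : 'M[k]_(n.+1 + n.+1)), c != 0 /\ SO2 A /\ g = c *: A.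

(* The image of SO_{2n+1}(k) in GL_{2n+2}(k): the stabilizer of 1 in GSO_{2n+2}(k). *)
Definition SO_odd_image (k : fieldType) (n : nat) (g : 'M[k]_(n.+1 + n.+1)) : Prop :=
  GSO2 g /\ g *m one_vec k n = one_vec k n.

Definition infinite_field (k : fieldType) : Prop :=
  forall s : seq k, exists x : k, x \notin s.

(* Main.v *)
Require Import Defs.
From mathcomp Require Import all_boot all_order all_algebra.
From mathcomp Require Import ring.
Set Implicit Arguments. Unset Strict Implicit. Unset Printing Implicit Defensive.
Import Order.TTheory GRing.Theory Num.Theory.
Local Open Scope ring_scope.

Section Tool.
Variables (k : fieldType) (n : nat).
Notation V := (vec k n).
Definition lft (u : V) (i : 'I_n.+1) := u (lshift n.+1 i) 0.
Definition rgt (u : V) (i : 'I_n.+1) := u (rshift n.+1 i) 0.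
Definition Bf (u v : V) : k := \sum_(i < n.+1) (lft u i * rgt v i + lft v i * rgt u i).

Lemma lftE (a b : k) (u v : V) i : lft (a *: u + b *: v) i = a * lft u i + b * lft v i.
Proof. by rewrite /lft !mxE. Qed.
Lemma rgtE (a b : k) (u v : V) i : rgt (a *: u + b *: v) i = a * rgt u i + b * rgt v i.
Proof. by rewrite /rgt !mxE. Qed.

Lemma q2E (u : V) : q2 u = \sum_i lft u i * rgt u i.
Proof. by []. Qed.

Lemma qlin (a b : k) (u v : V) :
  q2 (a *: u + b *: v) = a ^+ 2 * q2 u + b ^+ 2 * q2 v + a * b * Bf u v.
Proof.
rewrite !q2E /Bf !mulr_sumr -!big_split /=; apply: eq_bigr => i _.
rewrite lftE rgtE; ring.
Qed.

Lemma Bflin (a b : k) (u v w : V) :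
  Bf (a *: u + b *: v) w = a * Bf u w + b * Bf v w.
Proof.
rewrite /Bf !mulr_sumr -!big_split /=; apply: eq_bigr => i _.
rewrite lftE rgtE; ring.
Qed.

Lemma BfC (u v : V) : Bf u v = Bf v u.
Proof. by apply: eq_bigr => i _; rewrite addrC. Qed.

Lemma Bfxx (u : V) : Bf u u = 2 * q2 u.
Proof. by rewrite q2E /Bf mulr_sumr; apply: eq_bigr => i _; ring. Qed.

Lemma subE (u v : V) : u - v = 1 *: u + (-1) *: v.
Proof. by rewrite scale1r scaleN1r. Qed.
Lemma addE (u v : V) : u + v = 1 *: u + 1 *: v.
Proof. by rewrite !scale1r. Qed.

Definition jcol (v : V) : V := col_mx (dsubmx v) (usubmx v).
Definition rho (v : V) : 'rV[k]_(n.+1 + n.+1) := (q2 v)^-1 *: (jcol v)^T.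
Definition refl (v : V) : 'M[k]_(n.+1 + n.+1) := 1%:M - v *m rho v.

Lemma jcolE (v w : V) : ((jcol v)^T *m w) 0 0 = Bf w v.
Proof.
rewrite !mxE big_split_ord /Bf big_split /=; congr (_ + _); apply: eq_bigr => i _.
  by rewrite [(jcol v)^T _ _]mxE /jcol col_mxEu mxE /lft /rgt mulrC.
by rewrite [(jcol v)^T _ _]mxE /jcol col_mxEd mxE /lft /rgt mulrC.
Qed.

Lemma refl_mul (v w : V) : refl v *m w = w + (- (Bf w v / q2 v)) *: v.
Proof.
rewrite /refl mulmxBl mul1mx -mulmxA [rho v *m w]mx11_scalar mul_mx_scalar.
rewrite /rho -scalemxAl mxE jcolE scaleNr mulrC.
by [].
Qed.


Lemma refl_iso (v w : V) : q2 v != 0 -> q2 (refl v *m w) = q2 w.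
Proof.
move=> hv; rewrite refl_mul -[w in w + _]scale1r qlin expr1n !mul1r.
by field.
Qed.

Lemma refl_fix (v w : V) : Bf w v = 0 -> refl v *m w = w.
Proof. by move=> h; rewrite refl_mul h mul0r oppr0 scale0r addr0. Qed.

Lemma t2lin (a b : k) (u v : V) : t2 (a *: u + b *: v) = a * t2 u + b * t2 v.
Proof. rewrite /t2 !mxE; ring. Qed.

Lemma Bf_one (v : V) : Bf (one_vec k n) v = t2 v.
Proof.
rewrite /Bf (bigD1 ord_max) //= big1 ?addr0.
  rewrite /lft /rgt /t2 !mxE !eq_lshift !eq_rshift eq_lrshift eq_rlshift eqxx /=.
  by rewrite mul1r mulr1 addrC.
move=> i hi; rewrite /lft /rgt !mxE !eq_lshift !eq_rshift eq_lrshift eq_rlshift (negbTE hi) /=.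
by rewrite mul0r mulr0 addr0.
Qed.

Lemma refl_swap (x z : V) : q2 x = 0 -> q2 z = 0 -> Bf z x != 0 ->
  refl (z - x) *m x = z.
Proof.
move=> hx hz hp.
have hB : Bf x (z - x) = Bf z x.
  by rewrite BfC subE Bflin Bfxx hx; ring.
have hq : q2 (z - x) = - Bf z x.
  by rewrite subE qlin hx hz; ring.
rewrite refl_mul hB hq.
have -> : - (Bf z x / - Bf z x) = 1 by rewrite invrN mulrN opprK divff.
by rewrite scale1r addrC subrK.
Qed.


Lemma rowfree2 m (u v : 'rV[k]_m) :
  (forall a b : k, a *: u + b *: v = 0 -> a = 0 /\ b = 0) ->
  row_free (col_mx u v : 'M_(1 + 1, m)).
Proof.
move=> H; rewrite -kermx_eq0; apply/eqP/row_matrixP => i; rewrite row0.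
set r := row i _.
have hr : r *m col_mx u v = 0 by rewrite /r -row_mul mulmx_ker row0.
move: hr; rewrite -[r]hsubmxK mul_row_col (mx11_scalar (lsubmx r)) (mx11_scalar (rsubmx r)).
rewrite !mul_scalar_mx => /H [-> ->].
by rewrite raddf0 row_mx0.
Qed.

Lemma jcol_lin (a b : k) (u v : V) : jcol (a *: u + b *: v) = a *: jcol u + b *: jcol v.
Proof. by rewrite /jcol !linearD !linearZ /= !scale_col_mx add_col_mx. Qed.

Lemma jcol_inj0 (v : V) : jcol v = 0 -> v = 0.
Proof.
move/eqP; rewrite col_mx_eq0 => /andP [/eqP h1 /eqP h2].
by rewrite -[v]vsubmxK h1 h2 col_mx0.
Qed.


Lemma rho_indep (a b : V) : q2 a != 0 -> q2 b != 0 ->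
  (forall al be : k, al *: a + be *: b = 0 -> al = 0 /\ be = 0) ->
  forall g d : k, g *: rho a + d *: rho b = 0 -> g = 0 /\ d = 0.
Proof.
move=> ha hb ind g d h.
have : jcol ((g / q2 a) *: a + (d / q2 b) *: b) = 0.
  apply: trmx_inj; rewrite jcol_lin linearD !linearZ /= trmx0 -h /rho !scalerA.
  by [].
move/jcol_inj0/ind => [/eqP h1 /eqP h2].
move: h1 h2; rewrite !mulf_eq0 !invr_eq0 (negbTE ha) (negbTE hb) !orbF.
by move=> /eqP -> /eqP ->.
Qed.

Lemma zmod_id (M : zmodType) (o y x w : M) : o - y - (x - w) - o = w - x + - y.
Proof. by rewrite addrAC [o - y - o]addrAC subrr add0r opprB addrC. Qed.

Lemma refl_decomp (a b : V) :
  refl a *m refl b - 1%:M =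
  row_mx a b *m col_mx ((rho a *m b) 0 0 *: rho b - rho a) (- rho b).
Proof.
rewrite mul_row_col /refl mulmxBl mulmxBr !mul1mx mulmxBr mulmx1.
have -> : a *m rho a *m (b *m rho b) = a *m ((rho a *m b) 0 0 *: rho b).
  by rewrite -mul_scalar_mx -mx11_scalar !mulmxA.
by rewrite mulmxBr mulmxN zmod_id.
Qed.


Lemma lmod_id (M : lmodType k) (r1 r2 : M) (al be mu : k) :
  (- al) *: r1 + (al * mu - be) *: r2 = al *: (mu *: r2 - r1) + be *: - r2.
Proof.
rewrite scalerBr scalerA scaleNr scalerBl scalerN.
by rewrite addrC addrAC.
Qed.

Lemma rank_two (a b : V) : q2 a != 0 -> q2 b != 0 ->
  (forall al be : k, al *: a + be *: b = 0 -> al = 0 /\ be = 0) ->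
  \rank (refl a *m refl b - 1%:M) = 2.
Proof.
move=> ha hb ind; rewrite refl_decomp mxrankMfree.
  rewrite -mxrank_tr tr_row_mx; apply/eqP; apply: rowfree2 => al be h.
  apply: ind; apply: trmx_inj; by rewrite linearD !linearZ /= trmx0.
apply: rowfree2 => al be h.
have h' : (- al) *: rho a + (al * (rho a *m b) 0 0 - be) *: rho b = 0.
  by rewrite -h lmod_id.
have [/eqP h1 h2] := rho_indep ha hb ind h'.
move: h1; rewrite oppr_eq0 => /eqP h1; split => //.
by move: h2; rewrite h1 mul0r sub0r => /eqP; rewrite oppr_eq0 => /eqP.
Qed.


Lemma BfZ (c : k) (u w : V) : Bf (c *: u) w = c * Bf u w.
Proof. by rewrite -[c *: u]addr0 -(scale0r u) Bflin mul0r addr0. Qed.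

Lemma indep (x y z : V) : q2 x = 0 -> q2 y = 0 -> q2 z = 0 ->
  Bf z x != 0 -> Bf z y != 0 -> x != y ->
  forall al be : k, al *: (y - z) + be *: (z - x) = 0 -> al = 0 /\ be = 0.
Proof.
move=> hx hy hz hp hr hxy al be h.
have [e|ne] := eqVneq al be.
  subst be.
  have : al *: (y - x) = 0.
    by rewrite -h; apply/matrixP => i j; rewrite !mxE; ring.
  have hyx : (y == x) = false by rewrite eq_sym (negbTE hxy).
  by move/eqP; rewrite scalemx_eq0 subr_eq0 hyx orbF => /eqP ->.
have hw : (be - al) *: z = be *: x + (- al) *: y.
  apply/matrixP => i j; move/matrixP: h => /(_ i j); rewrite !mxE => h.
  by rewrite -[RHS]addr0 -h; ring.
have c0 : be - al != 0 by rewrite subr_eq0 eq_sym.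
have e1 : (be - al) * Bf z x = - al * Bf y x.
  by rewrite -BfZ hw Bflin Bfxx hx; ring.
have e2 : (be - al) * Bf z y = be * Bf x y.
  by rewrite -BfZ hw Bflin Bfxx hy; ring.
have e3 : be * (- al) * Bf x y = 0.
  have : q2 ((be - al) *: z + 0 *: z) = q2 (be *: x + (- al) *: y) by rewrite scale0r addr0 hw.
  by rewrite !qlin hx hy hz Bfxx hz !mulr0 !addr0 !add0r => <-.
have : (be - al) ^+ 2 * (Bf z x * Bf z y) = 0.
  have -> : (be - al) ^+ 2 * (Bf z x * Bf z y) = ((be - al) * Bf z x) * ((be - al) * Bf z y) by ring.
  rewrite e1 e2 BfC.
  have -> : - al * Bf x y * (be * Bf x y) = Bf x y * (be * - al * Bf x y) by ring.
  by rewrite e3 mulr0.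
move/eqP; rewrite !mulf_eq0 (negbTE hp) (negbTE hr) (negbTE c0).
by [].
Qed.


Lemma sum2 (i0 im : 'I_n.+1) (F : 'I_n.+1 -> k) : i0 != im ->
  (forall i, i != i0 -> i != im -> F i = 0) -> \sum_i F i = F i0 + F im.
Proof.
move=> hne hF; rewrite (bigD1 i0) //= (bigD1 im) /=; last by rewrite eq_sym.
rewrite big1 ?addr0 // => i /andP [h1 h2]; exact: hF.
Qed.

Lemma lin_nz (c0 c1 l : k) : (c0 != 0) || (c1 != 0) -> l != - c0 / c1 -> c0 + c1 * l != 0.
Proof.
case: (eqVneq c1 0) => [->|h1]; first by rewrite mul0r addr0 orbF.
move=> _ hl; apply: contra hl => /eqP h; apply/eqP.
have -> : c0 = - (c1 * l) by apply/eqP; rewrite -subr_eq0 opprK h.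
by rewrite opprK mulrC mulKf.
Qed.

Section Zpt.
Variables (i0 im : 'I_n.+1) (kap lam : k).
Definition zl : 'cV[k]_(n.+1) := \col_i (if i == im then lam else if i == i0 then kap * lam else 0).
Definition zr : 'cV[k]_(n.+1) := \col_i (if i == im then 1 - lam else if i == i0 then (lam - 1) / kap else 0).
Definition zpt : V := col_mx zl zr.

Hypothesis hne : i0 != im.
Hypothesis hk : kap != 0.

Lemma zl_lft i : lft zpt i = zl i 0. Proof. by rewrite /lft col_mxEu. Qed.
Lemma zr_rgt i : rgt zpt i = zr i 0. Proof. by rewrite /rgt col_mxEd. Qed.

Lemma zpt_q : q2 zpt = 0.
Proof.
rewrite q2E (sum2 hne).
  rewrite !zl_lft !zr_rgt !mxE !eqxx (negbTE hne) /=; by field.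
by move=> i h1 h2; rewrite zl_lft zr_rgt !mxE (negbTE h1) (negbTE h2) mul0r.
Qed.

Hypothesis him : im = ord_max.

Lemma zpt_t : t2 zpt = 1.
Proof.
by rewrite /t2 -him /zpt col_mxEu col_mxEd !mxE !eqxx addrC subrK.
Qed.

Definition c0 (x : V) := lft x im - lft x i0 / kap.
Definition c1 (x : V) := kap * rgt x i0 + lft x i0 / kap + rgt x im - lft x im.

Lemma zpt_B (x : V) : Bf zpt x = c0 x + c1 x * lam.
Proof.
rewrite /Bf (sum2 hne).
  rewrite !zl_lft !zr_rgt !mxE !eqxx (negbTE hne) /= /c0 /c1; by field.
by move=> i h1 h2; rewrite zl_lft zr_rgt !mxE (negbTE h1) (negbTE h2) mul0r mulr0 addr0.
Qed.

Lemma c01_nz (x : V) : t2 x = 1 ->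
  kap \notin [:: lft x i0 / lft x im; - 1 / rgt x i0] -> (c0 x != 0) || (c1 x != 0).
Proof.
move=> tx hkl; rewrite -negb_and; apply/negP => /andP [/eqP e0 /eqP e1].
have ea : lft x i0 = kap * lft x im.
  by move: e0; rewrite /c0 => /eqP; rewrite subr_eq0 => /eqP ->; field.
have eb : kap * rgt x i0 + rgt x im = 0.
  have <- : c0 x + c1 x = kap * rgt x i0 + rgt x im by rewrite /c0 /c1; ring.
  by rewrite e0 e1 addr0.
move: hkl; rewrite !inE negb_or => /andP [h1 h2].
have tx' : lft x im + rgt x im = 1 by rewrite -tx /t2 -him.
case: (eqVneq (lft x im) 0) => hl.
  have hr : rgt x im = 1 by rewrite -tx' hl add0r.
  have hr0 : kap * rgt x i0 = -1 by rewrite -(subr0 (kap * _)) -eb hr; ring.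
  have hr0' : rgt x i0 != 0.
    by apply/eqP => h0; move: hr0; rewrite h0 mulr0 => /eqP; rewrite eq_sym oppr_eq0 oner_eq0.
  by move: h2; rewrite -hr0 (mulfK hr0') eqxx.
by move: h1; rewrite ea (mulfK hl) eqxx.
Qed.

End Zpt.


Lemma exists_z : infinite_field k -> (0 < n)%N -> forall x y : V, Q2n x -> Q2n y ->
  exists z : V, Q2n z /\ Bf z x != 0 /\ Bf z y != 0.
Proof.
move=> inf n0 x y [qx tx] [qy ty].
pose i0 : 'I_n.+1 := ord0; pose im : 'I_n.+1 := ord_max.
have hne : i0 != im by rewrite -val_eqE /= eq_sym -lt0n.
have [kap hk] := inf [:: 0; lft x i0 / lft x im; -1 / rgt x i0; lft y i0 / lft y im; -1 / rgt y i0].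
move: hk; rewrite !inE !negb_or => /and5P [hk0 hx1 hx2 hy1 hy2].
have hk0' : kap != 0 by move: hk0; rewrite eq_sym.
have nx := @c01_nz i0 im kap hk0' (erefl _) x tx.
have ny := @c01_nz i0 im kap hk0' (erefl _) y ty.
have [lam hl] := inf [:: - c0 i0 im kap x / c1 i0 im kap x; - c0 i0 im kap y / c1 i0 im kap y].
move: hl; rewrite !inE negb_or => /andP [hl1 hl2].
exists (zpt i0 im kap lam); split; first split.
- exact: zpt_q.
- exact: zpt_t.
rewrite !zpt_B //; split; apply: lin_nz => //.
- by apply: nx; rewrite !inE negb_or hx1.
- by apply: ny; rewrite !inE negb_or hy1.
Qed.

End Tool.

Theorem proposition2p10 (k : fieldType) (n : nat) :
  infinite_field k -> (0 < n)%N ->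
  forall x y : vec k n, Q2n x -> Q2n y ->
  exists g : 'M[k]_(n.+1 + n.+1), SO_odd_image g /\ g *m x = y.
Proof.
move=> inf n0 x y hQx hQy.
have [qx tx] := hQx; have [qy ty] := hQy.
case: (eqVneq x y) => [<-|hxy].
  exists 1%:M; split; last by rewrite mul1mx.
  split; last by rewrite mul1mx.
  exists 1, 1%:M; split; first exact: oner_neq0.
  split; last by rewrite scale1r.
  split; first by move=> v; rewrite mul1mx.
  by rewrite subrr mxrank0.
have [z [[qz tz] [hp hr]]] := exists_z inf n0 hQx hQy.
have qa : q2 (y - z) != 0.
  have -> : q2 (y - z) = - Bf z y by rewrite subE qlin qy qz BfC; ring.
  by rewrite oppr_eq0.
have qb : q2 (z - x) != 0.
  have -> : q2 (z - x) = - Bf z x by rewrite subE qlin qx qz; ring.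
  by rewrite oppr_eq0.
exists (refl (y - z) *m refl (z - x)); split.
  split.
    exists 1, (refl (y - z) *m refl (z - x)); split; first exact: oner_neq0.
    split; last by rewrite scale1r.
    split.
      by move=> v; rewrite -mulmxA !refl_iso.
    by rewrite rank_two // => al be; apply: indep.
  have f1 : Bf (one_vec k n) (z - x) = 0 by rewrite Bf_one subE t2lin tx tz; ring.
  have f2 : Bf (one_vec k n) (y - z) = 0 by rewrite Bf_one subE t2lin ty tz; ring.
  by rewrite -mulmxA !refl_fix.
have s1 := refl_swap qx qz hp.
have s2 : refl (y - z) *m z = y by apply: refl_swap => //; rewrite BfC.
by rewrite -mulmxA s1 s2.
Qed.
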